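(* Let $F$ be an $L$-layer MLP as described in the context, trained with the cross-entropy loss $\mathcal{L}$ by gradient ascent with iterations $t$, and suppose that along this trajectory the logit gradient stays bounded away from zero, i.e. $\|\nabla_z\mathcal{L}(t)\|\ge c>0$ for some constant $c$ and all large $t$. Suppose the logits satisfy $\|z(t)\|\to\infty$. Then: (i) if there is a constant $C_1>0$ with $\|a_{L-1}(t)\|\le C_1$ for all large $t$, it follows that $\|W_L(t)\|\to\infty$; (ii) if there is no such bound on $\|a_{L-1}(t)\|$, there exists a subsequence of iterations $t_k$ such that $\|\nabla_{W_L}\mathcal{L}(t_k)\|\to\infty$.
   Context: An $L$-layer MLP $F$ with input $x$: $a_0=x$; for $1\le l\le L-1$, $h_l=W_la_{l-1}$ and $a_l=\sigma(h_l)$, where $W_l\in\mathbb{R}^{d_l\times d_{l-1}}$ (biases are absorbed into the weights by appending a constant coordinate $1$ to $a_{l-1}$) and $\sigma$ is an activation with $|\sigma'(s)|\le C$ for all $s\in\mathbb{R}$; the logits are $z=W_La_{L-1}\in\mathbb{R}^C$ and the output is $p=\mathrm{softmax}(z)$. The cross-entropy loss for class label $y$ is $\mathcal{L}=-\log(p_y)$, so $\nabla_z\mathcal{L}=p-e_y$ with $e_y$ the $y$-th standard basis vector, and by the chain rule $\nabla_{W_L}\mathcal{L}=(\nabla_z\mathcal{L})\,a_{L-1}^T$. Quantities at iteration $t$ of gradient ascent (parameters updated by adding a positive multiple of the gradient) are written with argument $(t)$. For vectors $\|\cdot\|$ is the Euclidean norm; for matrices it is the operator norm (largest singular value). *)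

(* Defs.v *)
From HB Require Import structures.
From mathcomp Require Import all_boot all_order all_algebra.
From mathcomp Require Import all_classical all_reals all_analysis.
Set Implicit Arguments. Unset Strict Implicit. Unset Printing Implicit Defensive.
Import Order.TTheory GRing.Theory Num.Theory.
Import numFieldNormedType.Exports.
Local Open Scope classical_set_scope.
Local Open Scope ring_scope.

Section MLP.
Variable R : realType.
(* layer widths d_0, d_1, ..., d_L (d_L = number of classes) *)
Variable d : nat -> nat.
Variable sigma : R -> R.

(* Parameters: W_l : R^{d_l x (d_{l-1}+1)}; the extra column is the bias,
   absorbed by appending a constant coordinate 1 to a_{l-1}. Only
   indices 1 <= l <= L are used. *)
Definition params := forall l : nat, 'M[R]_(d l, d l.-1 + 1).

Definition ext n (v : 'cV[R]_n) : 'cV[R]_(n + 1) := col_mx v (const_mx 1).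

Fixpoint act (W : params) (x : 'cV[R]_(d 0)) (l : nat) : 'cV[R]_(d l + 1) :=
  match l with
  | 0 => ext x
  | k.+1 => ext (map_mx sigma (W k.+1 *m act W x k))
  end.

Definition logits (W : params) (x : 'cV[R]_(d 0)) (L : nat) : 'cV[R]_(d L) :=
  W L *m act W x L.-1.

Definition softmax n (z : 'cV[R]_n) : 'cV[R]_n :=
  \col_i (expR (z i 0) / \sum_j expR (z j 0)).

Definition onehot n (y : 'I_n) : 'cV[R]_n := \col_i ((i == y)%:R).

Definition loss (W : params) (x : 'cV[R]_(d 0)) (L : nat) (y : 'I_(d L)) : R :=
  - ln (softmax (logits W x L) y 0).

Definition gradz (W : params) (x : 'cV[R]_(d 0)) (L : nat) (y : 'I_(d L))
  : 'cV[R]_(d L) := softmax (logits W x L) - onehot y.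

Definition gradWL (W : params) (x : 'cV[R]_(d 0)) (L : nat) (y : 'I_(d L))
  : 'M[R]_(d L, d L.-1 + 1) := gradz W x y *m (act W x L.-1)^T.

Definition upd (W : params) (l i j : nat) (s : R) : params :=
  fun l' => W l' + \matrix_(i', j')
    (if [&& l' == l, (i' : nat) == i & (j' : nat) == j] then s else 0).

Definition grad (W : params) (x : 'cV[R]_(d 0)) (L : nat) (y : 'I_(d L))
  (l : nat) : 'M[R]_(d l, d l.-1 + 1) :=
  \matrix_(i, j) derive1 (fun s => loss (upd W l i j s) x y) 0.

End MLP.

Definition vnorm (R : realType) n (v : 'cV[R]_n) : R :=
  Num.sqrt (\sum_i v i 0 ^+ 2).

Definition opnorm (R : realType) m n (A : 'M[R]_(m, n)) : R :=
  sup [set vnorm (A *m v) | v in [set v : 'cV[R]_n | vnorm v = 1]].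

(* Main.v *)
Require Import Defs.
From HB Require Import structures.
From mathcomp Require Import all_boot all_order all_algebra.
From mathcomp Require Import all_classical all_reals all_analysis.
From mathcomp Require Import lra.
Import Order.TTheory GRing.Theory Num.Theory.
Import numFieldNormedType.Exports.
Local Open Scope classical_set_scope.
Local Open Scope ring_scope.

Set Implicit Arguments.
Section H.
Variable R : realType.

Lemma vnorm_ge0 n (v : 'cV[R]_n) : 0 <= vnorm v.
Proof. exact: sqrtr_ge0. Qed.

Lemma vnormZ n k (v : 'cV[R]_n) : vnorm (k *: v) = `|k| * vnorm v.
Proof.
rewrite /vnorm. under eq_bigr do rewrite mxE exprMn.
by rewrite -mulr_sumr sqrtrM ?sqrtr_sqr // sqr_ge0.
Qed.

Lemma entry_le n (v : 'cV[R]_n) i : `|v i 0| <= vnorm v.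
Proof.
rewrite /vnorm -sqrtr_sqr ler_sqrt; last by apply: sumr_ge0 => j _; exact: sqr_ge0.
rewrite (bigD1 i) //= lerDl; apply: sumr_ge0 => j _; exact: sqr_ge0.
Qed.

Lemma opnorm_ub m n (A : 'M[R]_(m, n)) v : vnorm v = 1 -> vnorm (A *m v) <= opnorm A.
Proof.
move=> Hv; apply: ub_le_sup; last by exists v.
exists (Num.sqrt (\sum_i (\sum_j `|A i j|) ^+ 2)) => r [u Hu <-].
rewrite /vnorm ler_sqrt; last by apply: sumr_ge0 => j _; exact: sqr_ge0.
apply: ler_sum => i _.
have H1 : `|(A *m u) i 0| <= \sum_j `|A i j|.
  rewrite mxE; apply: le_trans (ler_norm_sum _ _ _) _.
  apply: ler_sum => j _; rewrite normrM.
  have := entry_le u j; rewrite Hu => Hj.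
  by rewrite -[X in _ <= X]mulr1 ler_wpM2l.
rewrite -real_normK ?num_real //; apply: lerXn2r => //; rewrite nnegrE //.
exact: le_trans H1.
Qed.

Lemma opnorm_mul m n (A : 'M[R]_(m, n)) v : 0 < vnorm v ->
  vnorm (A *m v) <= opnorm A * vnorm v.
Proof.
move=> Hv.
have Hu : vnorm ((vnorm v)^-1 *: v) = 1.
  by rewrite vnormZ ger0_norm ?invr_ge0 ?vnorm_ge0 // mulVf // gt_eqF.
have := opnorm_ub A _ Hu; rewrite -scalemxAr vnormZ ger0_norm ?invr_ge0 ?vnorm_ge0 //.
by rewrite ler_pdivrMl // mulrC.
Qed.

Lemma vnorm_ext n (v : 'cV[R]_n) : 1 <= vnorm (ext v).
Proof.
have := entry_le (ext v) (rshift n (0 : 'I_1)).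
by rewrite /ext col_mxEd mxE normr1.
Qed.

Lemma vnorm_act d sigma (W : params R d) x l : 1 <= vnorm (act sigma W x l).
Proof. case: l => [|l] /=; exact: vnorm_ext. Qed.

Lemma trmx_mul_self n (a : 'cV[R]_n) : a^T *m a = (vnorm a ^+ 2)%:M.
Proof.
apply/matrixP => i j; rewrite !ord1 !mxE /vnorm sqr_sqrtr; last first.
  by apply: sumr_ge0 => k _; exact: sqr_ge0.
by rewrite /= mulr1n; apply: eq_bigr => k _; rewrite mxE expr2.
Qed.

End H.

Theorem theorem1 (R : realType) (L : nat) (d : nat -> nat) (sigma : R -> R)
  (Csig : R) (x : 'cV[R]_(d 0)) (y : 'I_(d L))
  (W : nat -> params R d) (eta : nat -> R) (c : R) :
  (1 <= L)%N ->
  (forall s : R, derivable sigma s 1) ->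
  (forall s : R, `|derive1 sigma s| <= Csig) ->
  (forall t, 0 < eta t) ->
  (forall t l, (1 <= l <= L)%N ->
     W t.+1 l = W t l + eta t *: grad sigma (W t) x y l) ->
  0 < c ->
  (\forall t \near \oo, c <= vnorm (gradz sigma (W t) x y)) ->
  (fun t => vnorm (logits sigma (W t) x L)) @ \oo --> +oo ->
  ((exists C1 : R, 0 < C1 /\
      \forall t \near \oo, vnorm (act sigma (W t) x L.-1) <= C1) ->
     (fun t => opnorm (W t L)) @ \oo --> +oo)
  /\
  (~ (exists C1 : R, 0 < C1 /\
      \forall t \near \oo, vnorm (act sigma (W t) x L.-1) <= C1) ->
     exists phi : nat -> nat, {homo phi : m n / (m < n)%N} /\
       (fun k => opnorm (gradWL sigma (W (phi k)) x y)) @ \oo --> +oo).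
Proof.
move=> _ _ _ _ _ c0 Hg Hz; split.
  case=> C1 [C10 HC1]; apply/cvgryPge => A.
  move/cvgryPge: Hz => /(_ (A * C1)) Hz.
  near=> t.
  have Ha : vnorm (act sigma (W t) x L.-1) <= C1 by near: t.
  have Hzt : A * C1 <= vnorm (logits sigma (W t) x L) by near: t.
  have H1 := vnorm_act sigma (W t) x L.-1.
  have H2 := @opnorm_mul R _ _ (W t L) _ (lt_le_trans ltr01 H1).
  rewrite -/(logits _ _ _ _) in H2.
  have H3 := @vnorm_ge0 R _ (logits sigma (W t) x L).
  have H4 : 0 <= opnorm (W t L).
    have : 0 <= opnorm (W t L) * vnorm (act sigma (W t) x L.-1) by exact: le_trans H3 H2.
    by rewrite pmulr_lge0 // (lt_le_trans ltr01 H1).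
  have H5 : A * C1 <= opnorm (W t L) * C1.
    apply: (le_trans Hzt); apply: (le_trans H2); exact: ler_wpM2l.
  by rewrite ler_pM2r in H5.
Unshelve. all: try by end_near.
move=> NB.
case: Hg => N0 _ HN0.
have H k N : exists t, (N <= t)%N /\ k.+1%:R < vnorm (act sigma (W t) x L.-1).
  apply/not_existsP => Hn; apply: NB; exists k.+1%:R; split => //.
  exists N => // t /= Ht.
  have := Hn t; rewrite not_andP => -[]; first by rewrite Ht.
  by move/negP; rewrite -leNgt.
set a := fun t => act sigma (W t) x L.-1.
have [f Hf] := @choice _ _ (fun (p : nat * nat) t => (p.2 <= t)%N /\ p.1.+1%:R < vnorm (a t))
  (fun p => H p.1 p.2).
pose phi := fix phi (k : nat) : nat :=
  if k is k'.+1 then f (k, (phi k').+1) else f (0%N, N0).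
have Hinc k : (phi k < phi k.+1)%N := (Hf (k.+1, (phi k).+1)).1.
have Hbig k : k.+1%:R < vnorm (a (phi k)).
  by case: k => [|k]; [exact: (Hf (0%N, N0)).2 | exact: (Hf (k.+1, (phi k).+1)).2].
have HN k : (N0 <= phi k)%N.
  by elim: k => [|k IH]; [exact: (Hf (0%N, N0)).1 | exact: leq_trans IH (ltnW (Hinc k))].
exists phi; split.
  by apply: homo_ltn => //; exact: ltn_trans.
apply/cvgryPge => A.
have := @cvgr_idn R; move/cvgryPge => /(_ (A / c)).
apply: filterS => k /= Hk.
have Ha1 := Hbig k.
have Hg1 := HN0 _ (HN k).
have Hapos : 0 < vnorm (a (phi k)) by apply: le_lt_trans Ha1; rewrite ler0n.
have H2 := @opnorm_mul R _ _ (gradWL sigma (W (phi k)) x y) _ Hapos.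
rewrite /gradWL -mulmxA -/(a (phi k)) trmx_mul_self mul_mx_scalar vnormZ in H2.
rewrite ger0_norm ?exprn_ge0 ?vnorm_ge0 // in H2.
rewrite expr2 -mulrA [X in _ <= X]mulrC ler_pM2l // in H2.
rewrite /gradWL -/(a (phi k)).
rewrite ler_pdivrMr // in Hk.
have Hk0 : (0 : R) <= k%:R by rewrite ler0n.
rewrite -[k.+1]addn1 natrD in Ha1.
apply: le_trans H2.
nra.
Qed.
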